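(* Let $\Gamma$ be a finitely generated group and $H\le\Gamma$ an amenable subgroup. If for some finite symmetric generating set $S$ the Schreier graph $\mathrm{Sch}(\Gamma,H,S)$ is multi-ended, then $\Gamma$ is extraterrestrial.
   Context: The Schreier graph $\mathrm{Sch}(\Gamma,H,S)$ has vertices the right cosets $Hg$ and edges $\{Hg,Hgs\}$, $s\in S$. A connected graph is multi-ended if there is a finite set of vertices whose removal leaves at least two infinite connected components. A finitely generated group is extraterrestrial if its Cayley graph with respect to some (equivalently any) finite symmetric generating set is extraterrestrial, where a graph $G=(V,E)$ is extraterrestrial if for every $m$ there is $k$ such that for every $r$ there is a triple $(U,F,O)$ of pairwise disjoint finite vertex sets with $U\neq\emptyset$, $|U|\ge m|F|$, a bijection $\mu:U\to O$ with $d_G(u,\mu(u))\le k$, and every path from $U$ to $O$ either contains a vertex of $F$ or has length at least $r$. *)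

(* Defs.v *)
From Stdlib Require Import Reals List.
From mathcomp Require Import all_boot.

Set Implicit Arguments.
Unset Strict Implicit.
Unset Printing Implicit Defensive.

Local Open Scope group_scope.

(* Graphs (possibly infinite), given by a vertex type and an adjacency *)
(* relation.  Finite vertex sets are represented by duplicate-free     *)
(* lists; their cardinality is the length of the list.                 *)

Record graph := Graph { vert : Type; adj : vert -> vert -> Prop }.

(* [walk Gr (v0 :: vs)] : consecutive vertices are adjacent.
   A walk [v0 :: vs] has length [length vs] (number of edges). *)
Fixpoint walk (Gr : graph) (v : vert Gr) (vs : list (vert Gr)) : Prop :=
  match vs with
  | nil => True
  | w :: ws => adj v w /\ walk w ws
  end.

Definition walk_last (Gr : graph) (v : vert Gr) (vs : list (vert Gr)) :=
  List.last vs v.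

Definition dist_le (Gr : graph) (u v : vert Gr) (k : nat) : Prop :=
  exists vs, walk u vs /\ walk_last u vs = v /\ (length vs <= k)%coq_nat.

Definition connected_avoiding (Gr : graph) (F : list (vert Gr)) (u v : vert Gr)
  : Prop :=
  exists vs, walk u vs /\ walk_last u vs = v /\
    (forall x, In x (u :: vs) -> ~ In x F).

Definition finite_set (T : Type) (P : T -> Prop) : Prop :=
  exists l : list T, forall x, P x -> In x l.

Definition infinite_component (Gr : graph) (F : list (vert Gr)) (u : vert Gr)
  : Prop :=
  ~ In u F /\ ~ finite_set (connected_avoiding F u).

Definition multi_ended (Gr : graph) : Prop :=
  exists (F : list (vert Gr)) (u v : vert Gr),
    infinite_component F u /\ infinite_component F v /\
    ~ connected_avoiding F u v.

Definition extraterrestrial_graph (Gr : graph) : Prop :=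
  forall m : nat, exists k : nat, forall r : nat,
  exists (U F O : list (vert Gr)) (mu : vert Gr -> vert Gr),
    NoDup U /\ NoDup F /\ NoDup O /\
    (forall x, In x U -> ~ In x F) /\
    (forall x, In x U -> ~ In x O) /\
    (forall x, In x F -> ~ In x O) /\
    U <> nil /\
    (m * length F <= length U)%coq_nat /\
    (forall u, In u U -> In (mu u) O) /\
    (forall u u', In u U -> In u' U -> mu u = mu u' -> u = u') /\
    (forall o, In o O -> exists u, In u U /\ mu u = o) /\
    (forall u, In u U -> dist_le u (mu u) k) /\
    (forall u vs, In u U -> walk u vs -> In (walk_last u vs) O ->
        (exists x, In x (u :: vs) /\ In x F) \/ (r <= length vs)%coq_nat).

Section GroupDefs.
Variable G : groupType.

Definition word_prod (w : list G) : G := List.fold_right (fun s x => s * x) 1 w.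

Definition symmetric_set (S : list G) : Prop := forall s, In s S -> In (s^-1) S.

Definition generating_set (S : list G) : Prop :=
  forall g : G, exists w : list G, (forall s, In s w -> In s S) /\ g = word_prod w.

Definition fin_sym_gen_set (S : list G) : Prop :=
  symmetric_set S /\ generating_set S.

Definition finitely_generated : Prop := exists S, fin_sym_gen_set S.

Definition is_subgroup (H : G -> Prop) : Prop :=
  H 1 /\ (forall x y, H x -> H y -> H (x * y)) /\ (forall x, H x -> H (x^-1)).

(* H is amenable (as a discrete group): there is a finitely additive,
   left-H-invariant probability measure defined on all subsets of H. *)
Definition amenable_subgroup (H : G -> Prop) : Prop :=
  exists mu : (G -> Prop) -> R,
    mu H = R1 /\
    (forall A, (forall x, A x -> H x) -> Rle R0 (mu A)) /\
    (forall A B, (forall x, A x -> H x) -> (forall x, B x -> H x) ->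
       (forall x, A x -> B x -> False) ->
       mu (fun x => A x \/ B x) = Rplus (mu A) (mu B)) /\
    (forall h A, H h -> (forall x, A x -> H x) ->
       mu (fun x => A (h^-1 * x)) = mu A).

Definition Cayley (S : list G) : graph :=
  @Graph G (fun g g' => exists s, In s S /\ g' = g * s).

Definition rcoset (H : G -> Prop) (g : G) : G -> Prop := fun x => H (x * g^-1).

Definition rcoset_type (H : G -> Prop) : Type :=
  { C : G -> Prop | exists g, C = rcoset H g }.

Definition Schreier (H : G -> Prop) (S : list G) : graph :=
  @Graph (rcoset_type H)
    (fun C D => exists g s, In s S /\ proj1_sig C = rcoset H g /\
                            proj1_sig D = rcoset H (g * s)).

Definition extraterrestrial_group : Prop :=
  exists S, fin_sym_gen_set S /\ extraterrestrial_graph (Cayley S).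

End GroupDefs.

(* Main.v *)
Require Import Defs.
From Stdlib Require Import Reals List.
From mathcomp Require Import all_boot.
From Stdlib Require Import Classical ClassicalEpsilon FunctionalExtensionality PropExtensionality ProofIrrelevance Lia Lra.
From mathcomp Require Import zify.
Set Implicit Arguments. Unset Strict Implicit. Unset Printing Implicit Defensive.

Section Hall.
Variables (A B : finType) (b0 : B).

Definition NU (N : A -> {set B}) (Y : {set A}) := \bigcup_(a in Y) N a.

Definition hallc N (X : {set A}) := forall Y : {set A}, Y \subset X -> #|Y| <= #|NU N Y|.

Lemma NU_D (N : A -> {set B}) (C : {set B}) (Z : {set A}) : NU (fun a => N a :\: C) Z = NU N Z :\: C.
Proof.
apply/setP => x; rewrite /NU inE; apply/bigcupP/andP.
  by move=> [a aZ]; rewrite inE => /andP [xC xN]; split => //; apply/bigcupP; exists a.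
move=> [xC /bigcupP [a aZ xN]]; exists a => //; by rewrite inE xC.
Qed.

Lemma NU_sub (N : A -> {set B}) (Z : {set A}) a : a \in Z -> N a \subset NU N Z.
Proof. by move=> aZ; apply/subsetP => x xN; apply/bigcupP; exists a. Qed.

Lemma NU_U (N : A -> {set B}) (Z Y : {set A}) : NU N (Z :|: Y) = NU N Z :|: NU N Y.
Proof. by rewrite /NU bigcup_setU. Qed.

Lemma hall_ind n : forall (N : A -> {set B}) (X : {set A}), #|X| <= n -> hallc N X ->
  exists f : A -> B, {in X, forall a, f a \in N a} /\ {in X &, injective f}.
Proof.
elim: n => [|n IH] N X hX hc.
  have X0 : X = set0 by apply/eqP; rewrite -cards_eq0 -leqn0.
  by subst; exists (fun _ => b0); split => ?; rewrite inE.
case: (leqP #|X| n) => hXn; first exact: IH.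
have eX : #|X| = n.+1 by apply/eqP; rewrite eqn_leq hX hXn.
case: (classic (exists Y : {set A}, [/\ Y \subset X, Y != set0, Y != X & #|NU N Y| <= #|Y|])).
  move=> [Y [sYX nY0 nYX cY]].
  have ltY : #|Y| < #|X| by apply: proper_card; rewrite properEneq nYX sYX.
  have [f1 [f1N f1i]] : exists f : A -> B, {in Y, forall a, f a \in N a} /\ {in Y &, injective f}.
    apply: IH; first by rewrite -ltnS -eX.
    by move=> Z sZ; apply: hc; apply: subset_trans sZ sYX.
  pose NY := NU N Y.
  have [f2 [f2N f2i]] : exists f : A -> B, {in X :\: Y, forall a, f a \in (fun a => N a :\: NY) a}
       /\ {in X :\: Y &, injective f}.
    apply: IH.
      rewrite cardsDS // -ltnS -eX.
      have : 0 < #|Y| by rewrite card_gt0.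
      have : #|Y| <= #|X| by apply: subset_leq_card.
      lia.
    move=> Z sZ; rewrite NU_D.
    have dZY : [disjoint Z & Y].
      rewrite -setI_eq0; apply/eqP/setP => x; rewrite !inE.
      apply/negbTE/negP => /andP [xZ xY].
      by move/subsetP: sZ => /(_ x xZ); rewrite inE xY.
    have h1 := hc (Z :|: Y) _.
    have sZY : Z :|: Y \subset X.
      rewrite subUset sYX andbT; apply: subset_trans sZ _; exact: subsetDl.
    move: (h1 sZY); rewrite NU_U.
    have -> : #|Z :|: Y| = #|Z| + #|Y|.
      by rewrite cardsU; move: dZY; rewrite -setI_eq0 => /eqP ->; rewrite cards0 subn0.
    have : #|NU N Z :|: NY| <= #|NU N Z :\: NY| + #|NY|.
      have -> : NU N Z :|: NY = (NU N Z :\: NY) :|: NY.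
        by apply/setP => x; rewrite !inE; case: (x \in NY); rewrite ?orbT ?orbF.
      by rewrite cardsU leq_subr.
    rewrite /NY; lia.
  exists (fun a => if a \in Y then f1 a else f2 a); split.
    move=> a aX; case: ifP => aY; first exact: f1N.
    have : a \in X :\: Y by rewrite inE aY aX.
    by move/f2N; rewrite inE => /andP [].
  move=> a b aX bX /=.
  have mD : forall c, c \in X -> c \notin Y -> c \in X :\: Y by move=> c cX cY'; rewrite inE cY' cX.
  case: ifP => aY; case: ifP => bY.
  - exact: f1i.
  - move=> e; have := f2N b (mD b bX (negbT bY)); rewrite inE -e => /andP [/negP []].
    by apply: (subsetP (NU_sub N aY)); apply: f1N.
  - move=> e; have := f2N a (mD a aX (negbT aY)); rewrite inE e => /andP [/negP []].
    by apply: (subsetP (NU_sub N bY)); apply: f1N.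
  - by apply: f2i; apply: mD => //; rewrite ?aY ?bY.
move=> Hnc.
have : 0 < #|X| by rewrite eX.
rewrite card_gt0 => /set0Pn [a0 a0X].
have : 0 < #|N a0|.
  have := hc [set a0]; rewrite sub1set a0X /NU big_set1 cards1; by apply.
rewrite card_gt0 => /set0Pn [b bN].
have [f2 [f2N f2i]] : exists f : A -> B, {in X :\ a0, forall a, f a \in (fun a => N a :\: [set b]) a}
     /\ {in X :\ a0 &, injective f}.
  apply: IH; first by move: (cardsD1 a0 X); rewrite a0X eX; lia.
  move=> Z sZ; rewrite NU_D.
  case: (eqVneq Z set0) => [->|nZ0]; first by rewrite cards0.
  have sZX : Z \subset X by apply: subset_trans sZ _; exact: subsetDl.
  have nZX : Z != X.
    apply/eqP => eZ; move/subsetP: sZ => /(_ a0); rewrite eZ a0X !inE eqxx /=; by move/(_ isT).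
  have lt : #|Z| < #|NU N Z|.
    rewrite ltnNge; apply/negP => le; apply: Hnc; exists Z; by split.
  have := cardsD (NU N Z) [set b].
  have : #|NU N Z :&: [set b]| <= 1 by rewrite -(cards1 b); apply: subset_leq_card; exact: subsetIr.
  lia.
exists (fun a => if a == a0 then b else f2 a); split.
  move=> a aX; case: eqP => [->//|/eqP na].
  have : a \in X :\ a0 by rewrite !inE na aX.
  by move/f2N; rewrite inE => /andP [].
move=> a c aX cX /=.
have mD : forall x, x \in X -> x != a0 -> x \in X :\ a0 by move=> x xX xa; rewrite !inE xa xX.
case: eqP => [->|/eqP na]; case: eqP => [->//|/eqP nc].
- move=> e; have := f2N c (mD c cX nc); by rewrite inE -e inE eqxx.
- move=> e; have := f2N a (mD a aX na); by rewrite inE e inE eqxx.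
- by apply: f2i; apply: mD.
Qed.

End Hall.

Lemma card_val_in (T : choiceType) (s l : seq T) : uniq l -> {subset l <= s} ->
  #|[set a : seq_sub s | val a \in l]| = size l.
Proof.
move=> ul sl.
have e : [set a : seq_sub s | val a \in l] =i pmap insub l by move=> a; rewrite inE mem_pmap_sub.
rewrite (eq_card e); move/card_uniqP: (pmap_sub_uniq (seq_sub s) ul) => ->.
rewrite size_pmap_sub; apply/eqP; rewrite -all_count; apply/allP => x /sl //.
Qed.


Local Open Scope group_scope.

Section Fin.
Variables (G : groupType) (H : G -> Prop).

Definition Exp (K : seq G) := forall Phi : seq G, uniq Phi -> Phi != [::] ->
  (forall x, x \in Phi -> H x) ->
  2 * size Phi <= size (undup [seq x * k | x <- Phi, k <- K]).

Lemma finite_match (K Ls : seq G) (k0 : G) : k0 \in K -> Exp K -> uniq Ls ->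
  (forall x, x \in Ls -> H x) ->
  exists kn : G -> bool -> G, (forall x b, kn x b \in K) /\
    (forall x y b b', x \in Ls -> y \in Ls -> x * kn x b = y * kn y b' -> x = y /\ b = b').
Proof.
move=> k0K hE uL HL.
case: Ls uL HL => [|x0 Ls0] uL HL.
  by exists (fun _ _ => k0); split.
set Ls := x0 :: Ls0.
pose PK := undup [seq x * k | x <- Ls, k <- K].
pose A := (seq_sub Ls * bool)%type.
pose B := seq_sub PK.
have x0PK : x0 * k0 \in PK by rewrite mem_undup; apply/allpairsP; exists (x0, k0); rewrite /= inE eqxx.
pose bb0 : B := SeqSub x0PK.
pose N := fun p : A => [set z : B | val z \in [seq val p.1 * k | k <- K]].
have [f [fN fi]] : exists f : A -> B, {in [set: A], forall a, f a \in N a} /\ {in [set: A] &, injective f}.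
  apply: (@hall_ind A B bb0 #|[set: A]|) => // Y _.
  pose Psi := undup [seq val p.1 | p <- enum Y].
  have uPsi : uniq Psi by apply: undup_uniq.
  have sPsi : {subset Psi <= Ls}.
    move=> x; rewrite mem_undup => /mapP [p _ ->]; exact: valP.
  have h1 : #|Y| <= 2 * size Psi.
    have sY : Y \subset setX [set a : seq_sub Ls | val a \in Psi] [set: bool].
      apply/subsetP => p pY; rewrite !inE andbT mem_undup; apply/mapP; exists p => //.
      by rewrite mem_enum.
    apply: (leq_trans (subset_leq_card sY)); rewrite cardsX card_val_in // cardsT card_bool.
    by rewrite mulnC.
  case: (eqVneq Psi [::]) => [P0|Pn0].
    move: h1; rewrite P0 /= muln0 leqn0 => /eqP ->; done.
  have h2 := hE Psi uPsi Pn0 (fun x xP => HL x (sPsi x xP)).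
  apply: (leq_trans h1); apply: (leq_trans h2).
  have -> : NU N Y = [set z : B | val z \in undup [seq x * k | x <- Psi, k <- K]].
    apply/setP => z; rewrite inE mem_undup; apply/bigcupP/allpairsP.
      move=> [p pY]; rewrite inE => /mapP [k kK ->]; exists (val p.1, k) => /=; split => //.
      by rewrite mem_undup; apply/mapP; exists p => //; rewrite mem_enum.
    move=> [[x k] /= [xP kK ez]]; move: xP; rewrite mem_undup => /mapP [p pY ex].
    exists p; first by rewrite -mem_enum.
    rewrite inE; apply/mapP; exists k => //; rewrite -ex; exact: ez.
  rewrite card_val_in //; first exact: undup_uniq.
  move=> y; rewrite /PK !mem_undup => /allpairsP [[x k] [xP kK ->]].
  by apply/allpairsP; exists (x, k); split => //; apply: sPsi.
exists (fun x b => match insub x : option (seq_sub Ls) with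
                  | Some a => x^-1 * val (f (a, b)) | None => k0 end).
split.
  move=> x b; case: insubP => [a _ ea|_] //.
  have := fN (a, b) (in_setT _); rewrite inE /= => /mapP [k kK ->].
  by rewrite ea mulKg.
move=> x y b b' xL yL.
rewrite (insubT (fun x => x \in Ls) xL) (insubT (fun x => x \in Ls) yL) /= !mulVKg => /val_inj e.
have e2 := fi _ _ (in_setT _) (in_setT _) e.
by split; [move/(congr1 (fun p : A => val p.1)): e2 | move/(congr1 snd): e2].
Qed.
End Fin.

Section Mean.
Variables (G : groupType) (H : G -> Prop) (Hs : is_subgroup H) (mu : (G -> Prop) -> R).
Hypothesis m1 : mu H = R1.
Hypothesis mpos : forall A, (forall x, A x -> H x) -> Rle R0 (mu A).
Hypothesis madd : forall A B, (forall x, A x -> H x) -> (forall x, B x -> H x) ->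
       (forall x, A x -> B x -> False) ->
       mu (fun x => A x \/ B x) = Rplus (mu A) (mu B).
Hypothesis minv : forall h A, H h -> (forall x, A x -> H x) ->
       mu (fun x => A (h^-1 * x)) = mu A.

Lemma mu_ext A B : (forall x, A x <-> B x) -> mu A = mu B.
Proof.
move=> e; f_equal; apply: functional_extensionality => x; apply: propositional_extensionality; exact: e.
Qed.

Lemma H1 : H 1. Proof. exact: (proj1 Hs). Qed.
Lemma HM x y : H x -> H y -> H (x * y). Proof. exact: (proj1 (proj2 Hs)). Qed.
Lemma HV x : H x -> H (x^-1). Proof. exact: (proj2 (proj2 Hs)). Qed.
Lemma HVr x : H (x^-1) -> H x. Proof. by move/HV; rewrite invgK. Qed.

Definition mu' (A : G -> Prop) := mu (fun x => A (x^-1)).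

Lemma mu'_ext A B : (forall x, A x <-> B x) -> mu' A = mu' B.
Proof. by move=> e; apply: mu_ext => x; apply: e. Qed.

Lemma mu'H : mu' H = R1.
Proof. rewrite -m1; apply: mu_ext => x; split; [exact: HVr | exact: HV]. Qed.

Lemma mu'pos A : (forall x, A x -> H x) -> Rle R0 (mu' A).
Proof. by move=> sA; apply: mpos => x /sA /HVr. Qed.

Lemma mu'add A B : (forall x, A x -> H x) -> (forall x, B x -> H x) ->
       (forall x, A x -> B x -> False) ->
       mu' (fun x => A x \/ B x) = Rplus (mu' A) (mu' B).
Proof. by move=> sA sB d; apply: madd => [x /sA /HVr|x /sB /HVr|x]//; apply: d. Qed.

Lemma mu'inv k A : H k -> (forall x, A x -> H x) ->
       mu' (fun x => A (x * k^-1)) = mu' A.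
Proof.
move=> hk sA; rewrite /mu' -(minv (h := k^-1) (A := fun x => A (x^-1))); last first.
- by move=> x /sA /HVr.
- exact: HV.
by apply: mu_ext => x; rewrite invgK invgM.
Qed.

Lemma mu'0 : mu' (fun _ => False) = R0.
Proof.
have e := mu'add (A := fun _ => False) (B := fun _ => False) (fun _ f => False_ind _ f)
  (fun _ f => False_ind _ f) (fun _ f _ => f).
have : mu' (fun x => False \/ False) = mu' (fun _ => False) by apply: mu'_ext; tauto.
lra.
Qed.

Lemma mu'mono A B : (forall x, A x -> B x) -> (forall x, B x -> H x) -> Rle (mu' A) (mu' B).
Proof.
move=> sAB sB.
have e := mu'add (A := A) (B := fun x => B x /\ ~ A x) (fun x a => sB x (sAB x a))
  (fun x b => sB x (proj1 b)) (fun x a b => proj2 b a).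
have e2 : mu' (fun x => A x \/ (B x /\ ~ A x)) = mu' B.
  apply: mu'_ext => x; split; [case; [exact: sAB | by case] | move=> bx; tauto].
have := mu'pos (A := fun x => B x /\ ~ A x) (fun x b => sB x (proj1 b)).
lra.
Qed.

Fixpoint Rsum (l : seq R) := match l with [::] => R0 | a :: l => Rplus a (Rsum l) end.

Lemma mu'sum (P : G -> G -> Prop) (ks : seq G) : uniq ks ->
  (forall k x, P k x -> H x) ->
  (forall k k' x, k \in ks -> k' \in ks -> P k x -> P k' x -> k = k') ->
  mu' (fun x => exists k, k \in ks /\ P k x) = Rsum (map (fun k => mu' (P k)) ks).
Proof.
move=> uk sP dP; elim: ks uk dP => [|k ks IH] /= uk dP.
  by rewrite -mu'0; apply: mu'_ext => x; split => [[k []]|].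
move: uk => /andP [nk uk].
rewrite -IH //; last by move=> a b x ha hb; apply: dP; rewrite inE ?ha ?hb orbT.
rewrite -mu'add.
- apply: mu'_ext => x; split.
    move=> [k' []]; rewrite inE => /orP [/eqP -> |]; [by left | by move=> ?; right; exists k'].
  by case => [pk|[k' [hk pk]]]; [exists k; rewrite inE eqxx | exists k'; rewrite inE hk orbT].
- exact: sP.
- by move=> x [k' [_ /sP]].
- move=> x pk [k' [hk' pk']]; have ek := dP k k' x; rewrite !inE eqxx hk' orbT in ek.
  by move: nk; rewrite (ek isT isT pk pk') hk'.
Qed.

(* The contradiction: a "2-to-1" assignment into H with bounded multipliers *)
Lemma no_paradox (K : seq G) (kk : G -> bool -> G) :
  (forall k, k \in K -> H k) -> (forall x b, kk x b \in K) ->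
  (forall x y b b', H x -> H y -> x * kk x b = y * kk y b' -> x = y /\ b = b') -> False.
Proof.
move=> HK kkK inj.
pose I b := fun y => exists x, H x /\ y = x * kk x b.
have IH' : forall b y, I b y -> H y by move=> b y [x [hx ->]]; apply: HM => //; apply: HK.
have mI : forall b, mu' (I b) = R1.
  move=> b.
  pose A k := fun x => H x /\ kk x b = k.
  have e1 : mu' (I b) = mu' (fun y => exists k, k \in undup K /\ A k (y * k^-1)).
    apply: mu'_ext => y; split.
      move=> [x [hx ->]]; exists (kk x b); rewrite mem_undup kkK mulgK; by split.
    move=> [k [kK [hx ek]]]; exists (y * k^-1); split => //; by rewrite ek mulgVK.
  have hA : forall k y, A k (y * k^-1) -> H y.
    move=> k y [hy ek]; rewrite -(mulgVK k y); apply: HM => //; apply: HK; rewrite -ek; exact: kkK.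
  rewrite e1 mu'sum; [ | exact: undup_uniq | exact: hA | ]; last first.
    move=> k k' y _ _ a1 a2; have [hy ek] := a1; have [hy' ek'] := a2.
    have e : y * k^-1 * kk (y * k^-1) b = y * k'^-1 * kk (y * k'^-1) b by rewrite ek ek' !mulgVK.
    have [ex _] := inj _ _ _ _ hy hy' e.
    by rewrite -ek -ek' ex.
  rewrite (_ : map _ _ = map (fun k => mu' (A k)) (undup K)); last first.
    apply/eq_in_map => k kK /=; apply: (mu'inv (A := A k)); first by apply: HK; rewrite -mem_undup.
    by move=> x [].
  rewrite -mu'sum; first last.
  - by move=> k k' x _ _ [_ <-] [_ <-].
  - by move=> k x [].
  - exact: undup_uniq.
  rewrite -mu'H; apply: mu'_ext => x; split.
    by move=> [k [_ []]].
  by move=> hx; exists (kk x b); rewrite mem_undup kkK.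
have e2 := mu'add (A := I true) (B := I false) (IH' true) (IH' false).
have d : forall x, I true x -> I false x -> False.
  move=> y [x [hx ->]] [x' [hx' e]]; by have [_] := inj _ _ _ _ hx hx' e.
have sI : forall x, I true x \/ I false x -> H x by move=> x [] /IH'.
have := mu'mono (A := fun x => I true x \/ I false x) (B := H) sI (fun x h => h).
rewrite e2 // !mI mu'H; lra.
Qed.
End Mean.

Definition Inf (P : nat -> Prop) := forall M, exists n, M <= n /\ P n.

Lemma pigeon (T : eqType) (P : nat -> Prop) (g : nat -> T) (V : seq T) :
  Inf P -> (forall n, P n -> g n \in V) -> exists v, v \in V /\ Inf (fun n => P n /\ g n = v).
Proof.
elim: V P => [|v V IH] P hP hg.
  by have [n [_ /hg]] := hP 0.
case: (classic (Inf (fun n => P n /\ g n = v))) => [h|h]; first by exists v; rewrite inE eqxx.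
have [M0 hM0] : exists M0, forall n, M0 <= n -> ~ (P n /\ g n = v).
  apply: NNPP => nh; apply: h => M.
  apply: NNPP => nh2; apply: nh; exists M => n hn pn; apply: nh2; by exists n.
have h1 : Inf (fun n => P n /\ M0 <= n).
  move=> M; have [n [hn pn]] := hP (maxn M M0); exists n; split; [lia | split => //; lia].
have h2 : forall n, P n /\ M0 <= n -> g n \in V.
  move=> n [pn hn]; have := hg n pn; rewrite inE => /orP [/eqP gv|//].
  by case: (hM0 n hn).
have [v' [hv' hI]] := IH _ h1 h2.
exists v'; split; first by rewrite inE hv' orbT.
by move=> M; have [n [hn [[pn _] gn]]] := hI M; exists n.
Qed.

Section Comp.
Variables (G : groupType) (H : G -> Prop) (e : nat -> G) (esurj : forall g, exists n, e n = g).
Variables (K : seq G) (k0 : G) (k0K : k0 \in K) (hE : Exp H K).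

Definition Hb (x : G) : bool := if excluded_middle_informative (H x) then true else false.
Lemma HbP x : Hb x <-> H x.
Proof. by rewrite /Hb; case: excluded_middle_informative. Qed.

Definition Ls n := undup [seq x <- map e (iota 0 n.+1) | Hb x].

Lemma Ls_uniq n : uniq (Ls n). Proof. exact: undup_uniq. Qed.
Lemma Ls_H n x : x \in Ls n -> H x.
Proof. by rewrite mem_undup mem_filter => /andP [/HbP]. Qed.
Lemma Ls_mem n j : j <= n -> H (e j) -> e j \in Ls n.
Proof.
move=> jn hj; rewrite mem_undup mem_filter; apply/andP; split; first by apply/HbP.
by apply/mapP; exists j => //; rewrite mem_iota; lia.
Qed.

Definition Valid (kn : G -> bool -> G) n := (forall x b, kn x b \in K) /\
    (forall x y b b', x \in Ls n -> y \in Ls n -> x * kn x b = y * kn y b' -> x = y /\ b = b').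

Lemma ex_valid n : exists kn, Valid kn n.
Proof. apply: (finite_match k0K hE (Ls_uniq n)); exact: Ls_H. Qed.

Definition kf n := proj1_sig (constructive_indefinite_description _ (ex_valid n)).
Lemma kf_valid n : Valid (kf n) n.
Proof. exact: (proj2_sig (constructive_indefinite_description _ (ex_valid n))). Qed.

Definition pv n j := (kf n (e j) true, kf n (e j) false).

Definition Cons (ds : seq (G * G)) n := forall j, j < size ds -> pv n j = nth (1, 1) ds j.

Lemma step_ex (ds : seq (G * G)) : Inf (Cons ds) -> exists v, Inf (Cons (rcons ds v)).
Proof.
move=> hI.
have hV : forall n, Cons ds n -> pv n (size ds) \in [seq (a, b) | a <- K, b <- K].
  move=> n _; apply/allpairsP; exists (pv n (size ds)); rewrite /pv /=.
  by have [h _] := kf_valid n; rewrite !h.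
have [v [_ hv]] := pigeon (g := fun n => pv n (size ds)) hI hV.
exists v => M; have [n [hn [hc hg]]] := hv M; exists n; split => // j.
rewrite size_rcons ltnS leq_eqVlt => /orP [/eqP ->|hj].
  by rewrite nth_rcons ltnn eqxx.
by rewrite nth_rcons hj; apply: hc.
Qed.

Definition Dt := {ds : seq (G * G) | Inf (Cons ds)}.
Definition step (d : Dt) : Dt :=
  let v := proj1_sig (constructive_indefinite_description _ (step_ex (proj2_sig d))) in
  exist _ (rcons (proj1_sig d) v)
    (proj2_sig (constructive_indefinite_description _ (step_ex (proj2_sig d)))).

Lemma Inf_nil : Inf (Cons [::]). Proof. by move=> M; exists M; split => // j. Qed.
Definition D (i : nat) : Dt := iter i step (exist _ [::] Inf_nil).

Lemma D_size i : size (proj1_sig (D i)) = i.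
Proof. by elim: i => //= i IH; rewrite size_rcons IH. Qed.

Lemma D_nth j i : j < i -> nth (1, 1) (proj1_sig (D i)) j = nth (1, 1) (proj1_sig (D j.+1)) j.
Proof.
elim: i => // i IH; rewrite ltnS leq_eqVlt => /orP [/eqP ->//|hj].
rewrite /= nth_rcons D_size hj; exact: IH.
Qed.

Definition dch j := nth (1, 1) (proj1_sig (D j.+1)) j.
Definition idx x := proj1_sig (constructive_indefinite_description _ (esurj x)).
Lemma idxP x : e (idx x) = x.
Proof. exact: (proj2_sig (constructive_indefinite_description _ (esurj x))). Qed.

Definition kk x (b : bool) := if b then (dch (idx x)).1 else (dch (idx x)).2.

Lemma kk_agree M : exists n, M <= n /\ forall x b, idx x <= M -> kf n x b = kk x b.
Proof.
have [n [hn hc]] := proj2_sig (D M.+1) M; exists n; split => // x b hx.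
have := hc (idx x); rewrite D_size ltnS => /(_ hx); rewrite D_nth // -/(dch _) /pv idxP.
by move=> E; case: b; rewrite /kk -E.
Qed.

Lemma kk_K x b : kk x b \in K.
Proof. have [n [_ h]] := kk_agree (idx x); rewrite -h //; exact: (proj1 (kf_valid n)). Qed.

Lemma kk_inj x y b b' : H x -> H y -> x * kk x b = y * kk y b' -> x = y /\ b = b'.
Proof.
move=> hx hy.
have [n [hn h]] := kk_agree (maxn (idx x) (idx y)).
rewrite -h ?leq_maxl // -h ?leq_maxr //; apply: (proj2 (kf_valid n)).
- rewrite -(idxP x); apply: Ls_mem; last by rewrite idxP. by apply: leq_trans hn; apply: leq_maxl.
- rewrite -(idxP y); apply: Ls_mem; last by rewrite idxP. by apply: leq_trans hn; apply: leq_maxr.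
Qed.

End Comp.

Lemma folner (G : groupType) (H : G -> Prop) (e : nat -> G) :
  is_subgroup H -> amenable_subgroup H -> (forall g, exists n, e n = g) ->
  forall K : seq G, (forall k, k \in K -> H k) ->
  exists Phi : seq G, [/\ uniq Phi, Phi != [::], (forall x, x \in Phi -> H x) &
    size (undup [seq x * k | x <- Phi, k <- K]) < 2 * size Phi].
Proof.
move=> Hs [mu [m1 [mpos [madd minv]]]] esurj K HK.
apply: NNPP => nh.
have hE : Exp H K.
  move=> Phi u ne hP; rewrite leqNgt; apply/negP => lt; apply: nh; exists Phi; by split.
have : 2 * size [:: (1 : G)] <= size (undup [seq x * k | x <- [:: 1], k <- K]).
  apply: hE => //; by move=> x; rewrite inE => /eqP ->; apply: (proj1 Hs).
case EK : K => [|k0 K']; first by rewrite /=.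
move=> _.
have k0K : k0 \in K by rewrite EK inE eqxx.
apply: (no_paradox Hs m1 mpos madd minv HK (kk_K esurj k0K hE)).
move=> x y b b' hx hy; exact: kk_inj.
Qed.

Lemma InP (T : eqType) (x : T) (s : seq T) : reflect (In x s) (x \in s).
Proof.
elim: s => [|y s IH] /=; first by constructor.
rewrite inE; apply: (iffP orP).
  by case => [/eqP ->|/IH]; [left | right].
by case => [->|/IH]; [left; rewrite eqxx | right].
Qed.

Lemma NoDupP (T : eqType) (s : seq T) : reflect (NoDup s) (uniq s).
Proof.
elim: s => [|y s IH] /=; first by do 2 constructor.
apply: (iffP andP).
  by move=> [/InP ny /IH us]; constructor.
by move=> h; inversion h; split; [apply/InP | apply/IH].
Qed.

Lemma size_length (T : Type) (s : seq T) : size s = length s.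
Proof. by elim: s => //= x s ->. Qed.

Lemma NoDup_map_inj (A B : Type) (f : A -> B) (l : seq A) a b :
  NoDup (map f l) -> In a l -> In b l -> f a = f b -> a = b.
Proof.
elim: l => //= x l IH /NoDup_cons_iff [nin nd].
case=> [<-|ha]; case=> [<-|hb] //.
- by move=> e; exfalso; apply: nin; rewrite e; apply: in_map.
- by move=> e; exfalso; apply: nin; rewrite -e; apply: in_map.
- exact: IH.
Qed.

Lemma In_cat (T : Type) (z : T) (l1 l2 : seq T) : In z (l1 ++ l2) <-> In z l1 \/ In z l2.
Proof. by elim: l1 => [|y l1 IH] /=; [tauto | rewrite IH; tauto]. Qed.

Section Walks.
Variable Gr : graph.

Lemma walk_last_cons (x y : vert Gr) l : walk_last x (y :: l) = walk_last y l.
Proof.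
rewrite /walk_last; case: l => // z l.
elim: l z => // w l IH z; exact: IH.
Qed.

Lemma walk_app (x : vert Gr) l1 l2 :
  walk x (l1 ++ l2) <-> walk x l1 /\ walk (walk_last x l1) l2.
Proof.
elim: l1 x => [|y l1 IH] x; first by cbn [walk cat]; rewrite /walk_last /=; tauto.
rewrite walk_last_cons; cbn [walk cat]; rewrite IH; tauto.
Qed.


Lemma walk_last_app (x : vert Gr) l1 l2 :
  walk_last x (l1 ++ l2) = walk_last (walk_last x l1) l2.
Proof.
elim: l1 x => [|y l1 IH] x //.
by rewrite cat_cons !walk_last_cons IH.
Qed.

Lemma walk_last_in (x : vert Gr) l : In (walk_last x l) (x :: l).
Proof.
elim: l x => [|y l IH] x; first by left.
rewrite walk_last_cons; right; exact: IH.
Qed.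

Hypothesis adj_sym : forall x y : vert Gr, adj x y -> adj y x.

Lemma walk_rev (x : vert Gr) l : walk x l -> exists l', walk (walk_last x l) l' /\
  walk_last (walk_last x l) l' = x /\ (forall z, In z (walk_last x l :: l') -> In z (x :: l)).
Proof.
elim: l x => [|y l IH] x.
  by move=> _; exists nil; split => //; split => //.
move=> [axy wy]; have [l' [w' [e' s']]] := IH y wy.
rewrite walk_last_cons; exists (l' ++ (x :: nil)); split.
  apply/walk_app; split; first exact: w'.
  rewrite e'; split => //; exact: adj_sym.
split; first by rewrite walk_last_app e'.
move=> z [<-|]; first by right; apply: s'; left.
move=> /In_cat [hz|[<-|[]]]; last by left.
right; apply: s'; by right.
Qed.

Lemma ca_refl (F : seq (vert Gr)) x : ~ In x F -> connected_avoiding F x x.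
Proof. by move=> h; exists nil; split => //; split => // z [<-|[]]. Qed.

Lemma ca_trans (F : seq (vert Gr)) x y z :
  connected_avoiding F x y -> connected_avoiding F y z -> connected_avoiding F x z.
Proof.
move=> [l1 [w1 [e1 a1]]] [l2 [w2 [e2 a2]]]; exists (l1 ++ l2); split.
  by apply/walk_app; rewrite e1.
split; first by rewrite walk_last_app e1.
move=> v; rewrite -cat_cons In_cat => [[|hv]]; first exact: a1.
apply: a2; right; exact: hv.
Qed.

Lemma ca_sym (F : seq (vert Gr)) x y : connected_avoiding F x y -> connected_avoiding F y x.
Proof.
move=> [l [w [e a]]]; have [l' [w' [e' s']]] := walk_rev w.
rewrite e in w' e' s'; exists l'; split => //; split => // v /s'; exact: a.
Qed.

Lemma ca_notin (F : seq (vert Gr)) x y : connected_avoiding F x y -> ~ In y F.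
Proof. by move=> [l [_ [<- a]]]; apply: a; apply: walk_last_in. Qed.

End Walks.

Section Grp.
Variables (G : groupType) (H : G -> Prop) (S : seq G).
Hypotheses (Hs : is_subgroup H) (symS : symmetric_set S) (genS : generating_set S).

Local Notation Sch := (Schreier H S).
Local Notation Cay := (Cayley S).

Definition proj (x : G) : vert Sch :=
  @exist (G -> Prop) (fun C => exists g, C = rcoset H g) (rcoset H x) (ex_intro _ x erefl).

Lemma proj_eq x y : proj x = proj y <-> H (x * y^-1).
Proof.
split.
  move=> e; have := f_equal (fun C : vert Sch => proj1_sig C x) e; rewrite /= /rcoset => <-.
  rewrite mulgV; exact: H1.
move=> hxy; apply: subset_eq_compat; apply: functional_extensionality => z.
apply: propositional_extensionality; rewrite /rcoset; split => hz.
  by rewrite -(mulgVK x z) -mulgA; apply: HM.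
have e : z * x^-1 = z * y^-1 * (x * y^-1)^-1 by rewrite invgM invgK !mulgA mulgVK.
by rewrite e; apply: HM => //; apply: HV.
Qed.

Lemma proj_left h x : H h -> proj (h * x) = proj x.
Proof. by move=> hh; apply/proj_eq; rewrite mulgK. Qed.

Definition rep (c : vert Sch) : G := proj1_sig (constructive_indefinite_description _ (proj2_sig c)).
Lemma proj_rep c : proj (rep c) = c.
Proof.
case: c => C hC; apply: subset_eq_compat; rewrite /rep /=.
by rewrite -(proj2_sig (constructive_indefinite_description _ hC)).
Qed.

Lemma adj_proj x s : In s S -> adj (proj x) (proj (x * s)).
Proof. by move=> hs; exists x, s. Qed.

Lemma Sch_sym (C D : vert Sch) : adj C D -> adj D C.
Proof.
move=> [g [s [hs [eC eD]]]]; exists (g * s), s^-1; split; first exact: symS.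
by rewrite eD eC mulgK.
Qed.

Lemma walk_proj x vs : @walk Cay x vs -> @walk Sch (proj x) (map proj vs).
Proof.
elim: vs x => [|y vs IH] x //= [[s [hs ->]] w]; split; [exact: adj_proj | exact: IH].
Qed.

Lemma last_proj x vs : walk_last (proj x) (map proj vs) = proj (@walk_last Cay x vs).
Proof.
elim: vs x => [|y vs IH] x //.
by rewrite (walk_last_cons (Gr := Sch)) (walk_last_cons (Gr := Cay)) IH.
Qed.

Lemma walk_word x w : (forall s, In s w -> In s S) -> exists vs, @walk Cay x vs /\
  @walk_last Cay x vs = x * word_prod w /\ length vs = length w.
Proof.
elim: w x => [|s w IH] x hw.
  by exists nil; rewrite /= mulg1.
have [vs [wv [ev lv]]] := IH (x * s) (fun t ht => hw t (or_intror ht)).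
exists (x * s :: vs); split; first by split => //; exists s; split => //; apply: hw; left.
by rewrite (walk_last_cons (Gr := Cay)) ev /= mulgA lv.
Qed.

Lemma walk_prefix x vs y : @walk Cay x vs -> In y (x :: vs) ->
  exists w, (forall s, In s w -> In s S) /\ (length w <= length vs)%coq_nat /\ y = x * word_prod w.
Proof.
elim: vs x => [|z vs IH] x.
  by move=> _ [<-|[]]; exists nil; rewrite /= mulg1.
move=> [[s [hs ez]] wz] [<-|hy].
  by exists nil; split => //=; split; [lia | rewrite mulg1].
have [w [hw [lw ->]]] := IH z wz hy.
exists (s :: w); split; first by move=> t [<-|ht] //; apply: hw.
split; first by apply: le_n_S. by rewrite ez /= mulgA.
Qed.

Fixpoint aw n : seq (seq G) :=
  if n is n'.+1 then [::] :: [seq s :: w | s <- S, w <- aw n'] else [:: [::]].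

Lemma aw_mem n w : (forall s, In s w -> In s S) -> (length w <= n)%coq_nat -> w \in aw n.
Proof.
elim: n w => [|n IH] [|s w] hw lw.
- by rewrite inE.
- by move: lw => /=; lia.
- by rewrite inE eqxx.
rewrite /= inE; apply/orP; right; apply/allpairsP; exists (s, w); split => //.
  by apply/InP; apply: hw; left.
by apply: IH; [move=> t ht; apply: hw; right | move: lw => /=; lia].
Qed.

Definition en (j : nat) : G :=
  match (unpickle j : option (nat * nat)) with
  | Some (n, i) => word_prod (nth [::] (aw n) i)
  | None => 1 end.

Lemma en_surj g : exists j, en j = g.
Proof.
have [w [hw ->]] := genS g.
exists (pickle (length w, index w (aw (length w)))); rewrite /en pickleK.
by rewrite nth_index //; apply: aw_mem.
Qed.

End Grp.

Section Main.
Variables (G : groupType) (H : G -> Prop) (S : seq G).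
Hypotheses (Hs : is_subgroup H) (amen : amenable_subgroup H) (symS : symmetric_set S)
  (genS : generating_set S).
Local Notation Sch := (Schreier H S).
Local Notation Cay := (Cayley S).
Local Notation pr := (@proj G H S).
Variables (F0 : seq (vert Sch)) (u0 v0 : vert Sch).
Hypotheses (iu : infinite_component F0 u0) (iv : infinite_component F0 v0)
  (nc : ~ connected_avoiding F0 u0 v0).

Definition CA := @connected_avoiding Sch F0 u0.
Definition CB := @connected_avoiding Sch F0 v0.

Lemma CA_CB a : CA a -> CB a -> False.
Proof.
move=> ha hb; apply: nc; apply: (ca_trans ha); exact: (ca_sym (@Sch_sym G H S symS)).
Qed.

Lemma infl (P : vert Sch -> Prop) (l : seq (vert Sch)) : ~ finite_set P -> exists a, P a /\ ~ In a l.
Proof.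
move=> nf; apply: NNPP => h; apply: nf; exists l => x px.
by apply: NNPP => nx; apply: h; exists x.
Qed.

Lemma pairs_exist N : exists ps : seq (G * G), size ps = N /\
  NoDup (map (fun p => pr p.1) ps) /\ NoDup (map (fun p => pr p.2) ps) /\
  (forall p, In p ps -> CA (pr p.1) /\ CB (pr p.2)).
Proof.
elim: N => [|N [ps [sz [n1 [n2 hp]]]]]; first by exists [::]; split => //; split; [constructor|split; [constructor|]].
have [a [ha na]] := infl (map (fun p => pr p.1) ps) (proj2 iu).
have [b [hb nb]] := infl (map (fun p => pr p.2) ps) (proj2 iv).
exists ((rep a, rep b) :: ps); split; first by rewrite /= sz.
rewrite /= !proj_rep; split; first by constructor.
split; first by constructor.
by move=> p [<-|/hp] //=; rewrite !proj_rep.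
Qed.

Lemma words_bound (ps : seq (G * G)) : exists k, forall p, In p ps -> exists w,
  (forall s, In s w -> In s S) /\ (length w <= k)%coq_nat /\ p.2 = p.1 * word_prod w.
Proof.
elim: ps => [|p ps [k hk]]; first by exists 0.
have [w [hw ew]] := genS (p.1^-1 * p.2).
exists (maxn k (length w)) => q [<-|hq].
  by exists w; split => //; split; [lia | rewrite -ew mulVKg].
have [w' [hw' [lw' ->]]] := hk q hq; exists w'; split => //; split => //; lia.
Qed.

Fixpoint look (ps : seq (G * G)) (x : G) : G :=
  match ps with
  | [::] => 1
  | p :: ps' => if Hb H (x * p.1^-1) then p.1^-1 * p.2 else look ps' x
  end.

Lemma look_eq ps p x : NoDup (map (fun p => pr p.1) ps) -> In p ps -> H (x * p.1^-1) ->
  look ps x = p.1^-1 * p.2.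
Proof.
elim: ps => // q ps IH nd hp hx /=; move: nd => /= /NoDup_cons_iff [nin nd].
case: ifP => [/HbP hq|hq].
  case: hp => [-> //|hp]; exfalso; apply: nin.
  have e : pr q.1 = pr p.1.
    by rewrite -(proj2 (proj_eq S Hs x q.1) hq) (proj2 (proj_eq S Hs x p.1) hx).
  by rewrite e; apply: (in_map (fun p => pr p.1)).
case: hp => [eq|hp]; last by apply: IH.
by subst; move: hq; have := (proj2 (HbP H (x * p.1^-1)) hx) => ->.
Qed.

Lemma In_map' (A B : Type) (f : A -> B) (l : seq A) y :
  In y (map f l) <-> exists x, f x = y /\ In x l.
Proof.
elim: l => [|x l IH] /=; first by split => // [[x []]].
rewrite IH; split.
  by case => [<-|[z [<- hz]]]; [exists x; split; [|left] | exists z; split; [|right]].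
by move=> [z [<- [->|hz]]]; [left | right; exists z].
Qed.

Lemma main_ext : extraterrestrial_graph Cay.
Proof.
move=> m.
pose N := (2 * m * length F0).+1.
have [ps [sz [n1 [n2 hp]]]] := pairs_exist N.
have [k hk] := words_bound ps.
exists k => r.
pose F0' := map (@rep G H S) F0.
pose K0 := [seq (pw.1.1 * word_prod pw.2) * z^-1 | pw <- [seq (p, w) | p <- ps, w <- aw S r], z <- F0'].
pose K := [seq y <- K0 | Hb H y].
have HK : forall y, y \in K -> H y by move=> y; rewrite mem_filter => /andP [/HbP].
have [Phi [uPhi nPhi HPhi fPhi]] := folner Hs amen (@en_surj G S genS) HK.
pose PK := undup [seq h * y | h <- Phi, y <- K].
pose U := [seq h * p.1 | h <- Phi, p <- ps].
pose mu := fun x => x * look ps x.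
pose O := map mu U.
pose F' := undup [seq z * c | z <- PK, c <- F0'].
have ups : uniq ps by apply/NoDupP; apply: (NoDup_map_inv _ _ n1).
have hU : forall x, x \in U -> exists h p, [/\ h \in Phi, In p ps & x = h * p.1].
  by move=> x /allpairsP [[h p] /= [hh hp' ->]]; exists h, p; split => //; apply/InP.
have mu_eq : forall h p, h \in Phi -> In p ps -> mu (h * p.1) = h * p.2.
  move=> h p hh hp'; rewrite /mu (@look_eq ps p) //; first by rewrite -mulgA mulVKg.
  by rewrite mulgK; apply: HPhi.
have prU : forall x, x \in U -> CA (pr x).
  by move=> x /hU [h [p [hh hp' ->]]]; rewrite proj_left //; [case: (hp p hp') | apply: HPhi].
have prO : forall x, x \in O -> CB (pr x).
  move=> x /mapP [y /hU [h [p [hh hp' ->]]] ->]; rewrite mu_eq // proj_left //; last by apply: HPhi.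
  by case: (hp p hp').
have prF : forall x, x \in F' -> In (pr x) F0.
  move=> x; rewrite mem_undup => /allpairsP [[z c] /= [hz hc ->]].
  move: hz; rewrite mem_undup => /allpairsP [[h y] /= [hh hy ->]].
  move/InP: hc; rewrite /F0' In_map' => [[c0 [<- hc0]]].
  by rewrite proj_left ?proj_rep //; apply: HM => //; [apply: HPhi | apply: HK].
have injU : {in U &, injective mu}.
  move=> x y /hU [h [p [hh hp' ->]]] /hU [h' [p' [hh' hp'' ->]]]; rewrite !mu_eq // => e.
  have e2 : pr p.2 = pr p'.2.
    by rewrite -(proj_left S Hs p.2 (HPhi h hh)) e proj_left //; apply: HPhi.
  have ep := NoDup_map_inj n2 hp' hp'' e2; subst p'.
  by move/mulIg: e => ->.
have nU : U <> [::].
  have : exists x, x \in U.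
    move: nPhi; case EP: Phi => [//|h Phi'] _.
    case Eps: ps => [|p ps']; first by rewrite Eps in sz.
    exists (h * p.1); rewrite /U EP Eps; apply/allpairsP; exists (h, p); by rewrite !inE !eqxx.
  by move=> [x xin] e; rewrite e in xin.
exists U, F', O, mu.
have uU : uniq U.
  rewrite allpairs_uniq //; move=> [h p] [h' p'] /allpairsP [[a b] /= [ha hb [-> ->]]].
  move=> /allpairsP [[a' b'] /= [ha' hb' [-> ->]]] /= e.
  have e2 : pr b.1 = pr b'.1.
    by rewrite -(proj_left S Hs b.1 (HPhi a ha)) e proj_left //; apply: HPhi.
  have ep := NoDup_map_inj n1 (elimT (InP _ _) hb) (elimT (InP _ _) hb') e2; subst b'.
  by move/mulIg: e => ->.
split; first by apply/NoDupP.
split; first by apply/NoDupP; apply: undup_uniq.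
split; first by apply/NoDupP; rewrite map_inj_in_uniq.
split.
  move=> x /InP xU /InP xF; have := ca_notin (prU x xU); by apply; apply: prF.
split.
  move=> x /InP xU /InP xO; exact: (CA_CB (prU x xU) (prO x xO)).
split.
  move=> x /InP xF /InP xO; have := ca_notin (prO x xO); by apply; apply: prF.
split; first exact: nU.
split.
  rewrite -!size_length; apply/leP.
  have s1 : size F' <= (size PK * size F0')%N by rewrite /F' -(size_allpairs (fun z c => z * c)) size_undup.
  have s2 : size U = (size Phi * N)%N by rewrite /U size_allpairs sz.
  have s3 : size F0' = length F0 by rewrite /F0' size_map size_length.
  rewrite s2 /N; rewrite s3 in s1.
  have s4 : size PK <= (2 * size Phi)%N by apply: ltnW.
  apply: (leq_trans (leq_mul (leqnn m) s1)).
  apply: (@leq_trans (m * (2 * size Phi * length F0))%N).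
    by apply: leq_mul => //; apply: leq_mul.
  nia.
split; first by move=> x /InP xU; apply/InP; apply: map_f.
split; first by move=> x y /InP xU /InP yU; apply: injU.
split; first by move=> o /InP /mapP [x xU ->]; exists x; split => //; apply/InP.
split.
  move=> x /InP /hU [h [p [hh hp' ->]]].
  have [w [hw [lw ew]]] := hk p hp'.
  have [vs [wv [lv ll]]] := walk_word (h * p.1) hw.
  exists vs; split => //; split; last by rewrite ll.
  by rewrite lv mu_eq // ew mulgA.
move=> u vs /InP uinU wv /InP lO.
case: (Nat.le_gt_cases r (length vs)) => hr; [by right | left].
have CAu := prU u uinU.
have CBl := prO _ lO.
case: (classic (exists y, In y (u :: vs) /\ In (pr y) F0)); last first.
  move=> nh; exfalso; apply: (@CA_CB (pr (@walk_last Cay u vs))) => //.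
  apply: (ca_trans CAu); exists (map pr vs); split; first exact: walk_proj.
  split; first exact: last_proj.
  move=> x hx hxF; apply: nh.
  have : In x (map pr (u :: vs)) by [].
  by rewrite In_map' => [[y [ey hy]]]; exists y; rewrite ey.
move=> [y [hy hyF]].
have [h [p [hh hp' eu]]] := hU u uinU.
have [w [hw [lw ey]]] := walk_prefix wv hy.
set z := rep (pr y).
have Hyz : H (y * z^-1) by apply/(proj_eq S Hs); rewrite /z proj_rep.
pose yy := p.1 * word_prod w * z^-1.
have eyy : y = h * yy * z by rewrite /yy ey eu !mulgA mulgVK.
have Hyy : H yy.
  have -> : yy = h^-1 * (y * z^-1) by rewrite eyy mulgK mulKg.
  by apply: (HM Hs) => //; apply: (HV Hs); apply: HPhi.
have yyK : yy \in K.
  rewrite mem_filter; apply/andP; split; first by apply/HbP.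
  apply/allpairsP; exists ((p, w), z); split => //=.
    apply/allpairsP; exists (p, w); split => //=; first by apply/InP.
    by apply: aw_mem => //; lia.
  by rewrite /z /F0'; apply/InP; rewrite In_map'; exists (pr y).
exists y; split => //; apply/InP; rewrite eyy mem_undup; apply/allpairsP.
exists (h * yy, z); split => //=.
  by rewrite mem_undup; apply/allpairsP; exists (h, yy).
by rewrite /z /F0'; apply/InP; rewrite In_map'; exists (pr y).
Qed.

End Main.


Theorem mainTheorem9 (G : groupType) (H : G -> Prop) (S : list G) :
  finitely_generated G ->
  is_subgroup H ->
  amenable_subgroup H ->
  fin_sym_gen_set S ->
  multi_ended (Schreier H S) ->
  extraterrestrial_group G.
Proof.
move=> _ Hs amen [symS genS] [F0 [u0 [v0 [iu [iv nc]]]]].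
exists S; split; first by split.
exact: (main_ext Hs amen symS genS iu iv nc).
Qed.
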